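(* Let ${\bf A},{\bf A}^\dagger$ be linear operators acting on real functions on a set $\Omega$ (on a common invariant domain) with $[{\bf A},{\bf A}^\dagger]=I$. Let $D:\Omega\times\mathbb N\to\mathbb R$ be functions such that $({\bf A}^\dagger_l)^nD(x,0)=D(x,n)$ for all $n\in\mathbb N$, $x\in\Omega$, and ${\bf A}_lD(x,0)=0$. Then ${\bf A}\rightarrow^Da$ and ${\bf A}^\dagger\rightarrow^Da^\dagger$. Consequently, for any polynomials $\alpha_n$, $0\le n\le m$, $\sum_{n=0}^m\alpha_n({\bf A}^\dagger){\bf A}^n\rightarrow^D\sum_{n=0}^m a^n\alpha_n(a^\dagger)$.
   Context: $\mathbb N=\{0,1,2,\dots\}$. On functions $f:\mathbb N\to\mathbb R$: $af(n)=nf(n-1)$, $a^\dagger f(n)=f(n+1)$. $[X,Y]=XY-YX$ and $I$ is the identity. Left/right actions: $(K_lD)(x,n)=(KD(\cdot,n))(x)$, $(\widehat K_rD)(x,n)=(\widehat KD(x,\cdot))(n)$; $K\rightarrow^D\widehat K$ means $K_lD=\widehat K_rD$. *)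

(* Defs.v *)
From HB Require Import structures.
From mathcomp Require Import all_boot all_order all_algebra.
From mathcomp Require Import reals.
Set Implicit Arguments. Unset Strict Implicit. Unset Printing Implicit Defensive.
Import Order.TTheory GRing.Theory Num.Theory.
Local Open Scope ring_scope.

Definition op (R : realType) (T : Type) := (T -> R) -> (T -> R).

(* a f (n) = n f(n-1)  (for n = 0 the value is 0 regardless of f(n.-1)) *)
Definition a_op (R : realType) : op R nat := fun f n => n%:R * f n.-1.
Definition adag_op (R : realType) : op R nat := fun f n => f n.+1.

Definition poly_op (R : realType) (T : Type) (p : {poly R}) (K : op R T) : op R T :=
  fun f x => \sum_(i < size p) p`_i * iter i K f x.

Definition left_act (R : realType) (Omega : Type) (K : op R Omega)
  (D : Omega -> nat -> R) : Omega -> nat -> R :=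
  fun x n => K (fun y => D y n) x.
Definition right_act (R : realType) (Omega : Type) (Kh : op R nat)
  (D : Omega -> nat -> R) : Omega -> nat -> R :=
  fun x n => Kh (D x) n.

(* K ->^D Kh  :<->  K_l D = Kh_r D *)
Definition intertwines (R : realType) (Omega : Type) (D : Omega -> nat -> R)
  (K : op R Omega) (Kh : op R nat) : Prop :=
  left_act K D = right_act Kh D.

Definition lhs_op (R : realType) (Omega : Type) (m : nat) (alpha : nat -> {poly R})
  (A Adag : op R Omega) : op R Omega :=
  fun f x => \sum_(n < m.+1) poly_op (alpha n) Adag (iter n A f) x.

Definition rhs_op (R : realType) (m : nat) (alpha : nat -> {poly R}) : op R nat :=
  fun g k => \sum_(n < m.+1) iter n (@a_op R) (poly_op (alpha n) (@adag_op R) g) k.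

(* Main.v *)
Require Import Defs.
From HB Require Import structures.
From mathcomp Require Import all_boot all_order all_algebra.
From mathcomp Require Import reals.
From mathcomp Require Import zify ring.
From Stdlib Require Import FunctionalExtensionality.
Import Order.TTheory GRing.Theory Num.Theory.
Local Open Scope ring_scope.

Fixpoint ff (R : realType) (k n : nat) : R :=
  match n with 0%N => 1 | n'.+1 => k%:R * ff R k.-1 n' end.

Lemma iter_a (R : realType) n (g : nat -> R) k :
  iter n (@a_op R) g k = ff R k n * g (k - n)%N.
Proof.
elim: n k => [|n IH] k /=; first by rewrite subn0 mul1r.
rewrite /a_op IH mulrA; congr (_ * g _); lia.
Qed.

Lemma iter_adag (R : realType) i (g : nat -> R) k :
  iter i (@adag_op R) g k = g (k + i)%N.
Proof.
elim: i k => [|i IH] k /=; first by rewrite addn0.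
by rewrite /adag_op IH addSnnS.
Qed.

Theorem proposition3p1 (R : realType) (Omega : Type)
  (Dom : (Omega -> R) -> Prop) (A Adag : op R Omega) (D : Omega -> nat -> R)
  (* Dom is a linear subspace *)
  (Dom_lin : forall (c : R) f g, Dom f -> Dom g -> Dom (fun x => c * f x + g x))
  (* A and Adag are linear on Dom and leave Dom invariant *)
  (A_lin : forall (c : R) f g, Dom f -> Dom g ->
     A (fun x => c * f x + g x) = (fun x => c * A f x + A g x))
  (Adag_lin : forall (c : R) f g, Dom f -> Dom g ->
     Adag (fun x => c * f x + g x) = (fun x => c * Adag f x + Adag g x))
  (A_inv : forall f, Dom f -> Dom (A f))
  (Adag_inv : forall f, Dom f -> Dom (Adag f))
  (* [A, Adag] = I on Dom *)
  (comm : forall f, Dom f -> (fun x => A (Adag f) x - Adag (A f) x) = f)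
  (D0_dom : Dom (fun x => D x 0%N))
  (hD : forall n x, iter n Adag (fun y => D y 0%N) x = D x n)
  (hA0 : forall x, A (fun y => D y 0%N) x = 0) :
  intertwines D A (@a_op R) /\ intertwines D Adag (@adag_op R) /\
  (forall (m : nat) (alpha : nat -> {poly R}),
     intertwines D (lhs_op m alpha A Adag) (rhs_op m alpha)).
Proof.
have fe := @functional_extensionality.
have Z : Dom (fun _ => 0).
  have H := Dom_lin (-1) _ _ D0_dom D0_dom.
  have E : (fun x => -1 * D x 0%N + D x 0%N) = (fun _ => 0 : R).
    by apply fe => x; rewrite mulN1r addNr.
  by rewrite E in H.
have scal : forall K : op R Omega,
    (forall c f g, Dom f -> Dom g ->
       K (fun x => c * f x + g x) = fun x => c * K f x + K g x) ->
    forall c f, Dom f -> K (fun x => c * f x) = fun x => c * K f x.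
  move=> K Kl c f Df.
  have H0 : K (fun _ => 0) = fun _ => 0.
    have := Kl 1 _ _ Z Z.
    have -> : (fun x : Omega => 1 * 0 + 0 : R) = fun _ => 0.
      by apply fe => x; rewrite mul1r addr0.
    move=> E; apply fe => x; move/(congr1 (fun h => h x)): E => /= E.
    by move/eqP: E; rewrite mul1r -{1}[K _ x]addr0 (inj_eq (addrI _)) eq_sym => /eqP.
  have -> : (fun x => c * f x) = (fun x => c * f x + (fun _ => 0) x).
    by apply fe => x; rewrite addr0.
  rewrite (Kl c f (fun _ => 0)) // H0; apply fe => x; by rewrite addr0.
have iterDom : forall K : op R Omega, (forall f, Dom f -> Dom (K f)) ->
    forall n f, Dom f -> Dom (iter n K f).
  by move=> K Ki; elim=> [|n IH] f Df //=; apply: Ki; apply: IH.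
have iterscal : forall K : op R Omega,
    (forall c f g, Dom f -> Dom g ->
       K (fun x => c * f x + g x) = fun x => c * K f x + K g x) ->
    (forall f, Dom f -> Dom (K f)) ->
    forall n c f, Dom f -> iter n K (fun x => c * f x) = fun x => c * iter n K f x.
  move=> K Kl Ki; elim=> [|n IH] c f Df //=.
  by rewrite IH // scal //; apply: iterDom.
have DD : forall k, (fun y => D y k) = iter k Adag (fun y => D y 0%N).
  by move=> k; apply fe => y; rewrite hD.
have Dk : forall k, Dom (fun y => D y k).
  by move=> k; rewrite DD; apply: iterDom.
have AdD : forall i j, iter i Adag (fun y => D y j) = fun y => D y (j + i)%N.
  by move=> i j; rewrite DD -iterD addnC -DD.
have AD : forall k, A (fun y => D y k) = fun y => k%:R * D y k.-1.
  elim=> [|k IH]; first by apply fe => y; rewrite hA0 mul0r.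
  rewrite (DD k.+1) iterS -DD.
  apply fe => y; move: (congr1 (fun h => h y) (comm _ (Dk k))) => /=.
  rewrite IH scal //=.
  have -> : k%:R * Adag (fun y0 => D y0 k.-1) y = k%:R * D y k.
    case: k {IH} => [|k]; first by rewrite !mul0r.
    by move: (congr1 (fun h => h y) (AdD 1%N k)); rewrite addn1 /= => ->.
  move/eqP; rewrite subr_eq => /eqP ->.
  rewrite -addn1 natrD; ring.
split.
  apply fe => x; apply fe => n; by rewrite /left_act /right_act /a_op AD.
split.
  apply fe => x; apply fe => n.
  by move: (congr1 (fun h => h x) (AdD 1%N n)); rewrite addn1 /left_act /right_act /adag_op /= => ->.
have iterA : forall n k, iter n A (fun y => D y k) = fun y => ff R k n * D y (k - n)%N.
  elim=> [|n IH] k; first by apply fe => y; rewrite /= subn0 mul1r.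
  rewrite iterSr AD (iterscal A A_lin A_inv n _ (fun y => D y k.-1)) // IH.
  apply fe => y; rewrite mulrA; congr (_ * D y _); lia.
move=> m alpha; apply fe => x; apply fe => n.
rewrite /left_act /right_act /lhs_op /rhs_op; apply eq_bigr => j _.
rewrite iterA iter_a /poly_op mulr_sumr; apply eq_bigr => i _.
rewrite (iterscal Adag Adag_lin Adag_inv i _ (fun y => D y (n - j)%N)) //.
by rewrite AdD iter_adag mulrCA.
Qed.
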